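(* Let $\mathcal{H}_{A_1},\dots,\mathcal{H}_{A_N}$ be finite-dimensional Hilbert spaces and let $W_{A_1\cdots A_N}\in\mathcal{W}(\bigotimes_{i=1}^N\mathcal{H}_{A_i})$ be a beyond quantum state. Then there exists a semiquantum game $\mathbb{G}_{sq}$ and a choice of local measurements $M_{A_iA_i^o}$, $i=1,\dots,N$, such that the expected payoff obtained from $W_{A_1\cdots A_N}$ with these measurements is strictly negative, whereas for every density operator $\rho_{A_1\cdots A_N}\in\mathcal{D}(\bigotimes_{i=1}^N\mathcal{H}_{A_i})$ and every choice of local measurements (POVMs on $\mathcal{H}_{A_i}\otimes\mathcal{H}_{A_i^o}$ with outcome sets those of the game) the expected payoff is nonnegative. In short: $\mathcal{I}_{\mathbb{G}_{sq}}(W_{A_1\cdots A_N})<0$ while $\mathcal{I}_{\mathbb{G}_{sq}}(\rho_{A_1\cdots A_N})\ge0$ for all $\rho_{A_1\cdots A_N}\in\mathcal{D}(\bigotimes_{i=1}^N\mathcal{H}_{A_i})$.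
   Context: A POPT state on $\bigotimes_{i=1}^N\mathcal{H}_{A_i}$ is a Hermitian unit-trace operator $W$ with $\operatorname{Tr}[W(P_1\otimes\cdots\otimes P_N)]\ge0$ for all positive semidefinite $P_i$ on $\mathcal{H}_{A_i}$; the set of these is $\mathcal{W}(\bigotimes_i\mathcal{H}_{A_i})$. $\mathcal{D}(\bigotimes_i\mathcal{H}_{A_i})$ is the set of density operators. A beyond quantum state is an element of $\mathcal{W}\setminus\mathcal{D}$. An $N$-partite semiquantum game $\mathbb{G}_{sq}$ consists of finite-dimensional Hilbert spaces $\mathcal{H}_{A_i^o}$, finite families of pure states $\{\psi^{s_i}_{A_i^o}\}_{s_i\in\mathcal{S}_i}$ on $\mathcal{H}_{A_i^o}$ (quantum inputs), finite output sets $\mathcal{O}_i$, and a real payoff function $\beta:\times_{i=1}^N(\mathcal{S}_i\times\mathcal{O}_i)\to\mathbb{R}$. Given a (POPT or quantum) state $Z$ on $\bigotimes_i\mathcal{H}_{A_i}$ and POVMs $M_{A_iA_i^o}=\{\pi^{a_i}_{A_iA_i^o}\}_{a_i\in\mathcal{O}_i}$ on $\mathcal{H}_{A_i}\otimes\mathcal{H}_{A_i^o}$, the correlation is $p(a_1,\dots,a_N|\psi^{s_1},\dots,\psi^{s_N})=\operatorname{Tr}[(\bigotimes_i\pi^{a_i}_{A_iA_i^o})(Z\otimes\bigotimes_i\psi^{s_i}_{A_i^o})]$ (tensor factors reordered appropriately), and the expected payoff is $\mathcal{I}_{\mathbb{G}_{sq}}(Z)=\sum_{s_1,a_1,\dots,s_N,a_N}\beta(s_1,a_1,\dots,s_N,a_N)\,p(a_1,\dots,a_N|\psi^{s_1},\dots,\psi^{s_N})$.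 *)

(* Defs.v *)
From HB Require Import structures.
From mathcomp Require Import all_boot all_order all_algebra.
Set Implicit Arguments. Unset Strict Implicit. Unset Printing Implicit Defensive.
Import Order.TTheory GRing.Theory Num.Theory.
Local Open Scope ring_scope.

Section Defs.
Variable C : numClosedFieldType.

(* An operator on the Hilbert space C^T (T a finite index set = basis),
   given by its matrix entries. *)
Definition op (T : finType) := T -> T -> C.

Definition hermitian (T : finType) (A : op T) : Prop :=
  forall x y : T, A y x = (A x y)^*.

Definition psd (T : finType) (A : op T) : Prop :=
  hermitian A /\
  forall v : T -> C, 0 <= \sum_(x : T) \sum_(y : T) (v x)^* * A x y * v y.

Definition trace (T : finType) (A : op T) : C := \sum_(x : T) A x x.

Definition trace_mul (T : finType) (A B : op T) : C :=
  \sum_(x : T) \sum_(y : T) A x y * B y x.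

Definition density (T : finType) (A : op T) : Prop := psd A /\ trace A = 1.

Definition unit_vec (T : finType) (v : T -> C) : Prop :=
  \sum_(x : T) v x * (v x)^* = 1.
Definition proj (T : finType) (v : T -> C) : op T := fun x y => v x * (v y)^*.

Definition povm (T : finType) (n : nat) (pi : 'I_n -> op T) : Prop :=
  (forall a, psd (pi a)) /\
  (forall x y : T, \sum_(a < n) pi a x y = (x == y)%:R).

(* N-partite systems: party i has a Hilbert space of dimension d i,
   with basis 'I_(d i); the tensor product has basis tuples. *)
Definition tidx (N : nat) (d : 'I_N -> nat) : finType :=
  {dffun forall i : 'I_N, 'I_(d i)}.

Definition tensor_op (N : nat) (d : 'I_N -> nat)
  (P : forall i : 'I_N, op 'I_(d i)) : op (tidx d) :=
  fun x y => \prod_(i < N) P i (x i) (y i).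

Definition popt (N : nat) (d : 'I_N -> nat) (W : op (tidx d)) : Prop :=
  hermitian W /\ trace W = 1 /\
  forall P : forall i : 'I_N, op 'I_(d i),
    (forall i, psd (P i)) -> 0 <= trace_mul W (tensor_op P).

(* N-partite semiquantum game: party i gets quantum inputs psi i s
   (s in S_i = 'I_(ns i)), pure states on H_{A_i^o} = C^(dout i), and
   outputs in O_i = 'I_(no i); beta is the payoff function. *)
Record sqgame (N : nat) := SQGame {
  ns : 'I_N -> nat;
  no : 'I_N -> nat;
  dout : 'I_N -> nat;
  psi : forall i : 'I_N, 'I_(ns i) -> 'I_(dout i) -> C;
  beta : {dffun forall i : 'I_N, 'I_(ns i)} ->
         {dffun forall i : 'I_N, 'I_(no i)} -> C
}.
Arguments ns {N} G i : rename.
Arguments no {N} G i : rename.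
Arguments dout {N} G i : rename.
Arguments psi {N} G i s _ : rename.
Arguments beta {N} G s a : rename.

Definition valid_game (N : nat) (G : sqgame N) : Prop :=
  (forall i s, unit_vec (psi G i s)) /\
  (forall s a, beta G s a \is Num.real).

Definition local_meas (N : nat) (d : 'I_N -> nat) (G : sqgame N) :=
  forall i : 'I_N, 'I_(no G i) -> op ('I_(d i) * 'I_(dout G i))%type.

Definition valid_meas (N : nat) (d : 'I_N -> nat) (G : sqgame N)
  (M : local_meas d G) : Prop := forall i, povm (M i).

(* p(a | psi^s) = Tr[(pi^{a_1} (x) ... (x) pi^{a_N}) (Z (x) psi^{s_1} (x) ... )],
   the tensor factors being reordered as A_1 A_1^o ... A_N A_N^o;
   basis of the joint space: pairs (x, u), x in tidx d, u in tidx (dout G). *)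
Definition correlation (N : nat) (d : 'I_N -> nat) (G : sqgame N)
  (Z : op (tidx d)) (M : local_meas d G)
  (a : {dffun forall i : 'I_N, 'I_(no G i)})
  (s : {dffun forall i : 'I_N, 'I_(ns G i)}) : C :=
  \sum_(x : tidx d) \sum_(u : tidx (dout G))
  \sum_(y : tidx d) \sum_(w : tidx (dout G))
    (\prod_(i < N) M i (a i) (x i, u i) (y i, w i)) *
    (Z y x * \prod_(i < N) proj (psi G i (s i)) (w i) (u i)).

Definition payoff (N : nat) (d : 'I_N -> nat) (G : sqgame N)
  (Z : op (tidx d)) (M : local_meas d G) : C :=
  \sum_(s : {dffun forall i : 'I_N, 'I_(ns G i)})
  \sum_(a : {dffun forall i : 'I_N, 'I_(no G i)})
    beta G s a * correlation Z M a s.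

End Defs.

(* Main.v *)
Require Import Defs.
From HB Require Import structures.
From mathcomp Require Import all_boot all_order all_algebra.
From mathcomp Require Import ring.
From Stdlib Require Import Classical.
Import Order.TTheory GRing.Theory Num.Theory.
Local Open Scope ring_scope.
Local Open Scope sesquilinear_scope.
Set Implicit Arguments. Unset Strict Implicit. Unset Printing Implicit Defensive.

Section Aux.
Variable C : numClosedFieldType.

Lemma sum_enum_val (T : finType) (F : T -> C) :
  \sum_(x : T) F x = \sum_(i < #|T|) F (enum_val i).
Proof.
rewrite -(big_enum_val (A := predT)). by apply: eq_bigl => x.
Qed.

Definition gmat (T : finType) (A : op C T) : 'M[C]_#|T| :=
  \matrix_(i, j) A (enum_val i) (enum_val j).
Definition gvec (T : finType) (A : op C T) (k : 'I_#|T|) (x : T) : C :=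
  sqrtC (spectral_diag (gmat A) 0 k) * (spectralmx (gmat A) k (enum_rank x))^*.
Definition gvecn (T : finType) (A : op C T) (n : nat) (k : 'I_n) (x : T) : C :=
  if (insub (val k) : option 'I_#|T|) is Some j then gvec A j x else 0.

Lemma gram_ord (T : finType) (A : op C T) : psd A ->
  forall x y, A x y = \sum_k gvec A k x * (gvec A k y)^*.
Proof.
move=> [hA pA].
rewrite /gvec.
pose m := #|T|.
have AmH : (gmat A)^t* = gmat A.
  by apply/matrixP => i j; rewrite !mxE -hA.
have nAm : gmat A \is normalmx by apply/normalmxP; rewrite AmH.
have Peq := orthomx_spectralP nAm.
set Am := gmat A in Peq *.
set P := spectralmx Am in Peq *.
set l := spectral_diag Am in Peq *.
have Pu : P \is unitarymx := spectral_unitarymx Am.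
rewrite invmx_unitary // in Peq.
have Dl : P *m Am *m P^t* = diag_mx l.
  by rewrite Peq !mulmxA (unitarymxP Pu) mul1mx -mulmxA (unitarymxP Pu) mulmx1.
have l0 : forall k, 0 <= l 0 k.
  move=> k.
  have := pA (fun x => (P k (enum_rank x))^*).
  have -> : l 0 k = (diag_mx l) k k by rewrite mxE eqxx mulr1n.
  rewrite -Dl mxE.
  congr (0 <= _).
  rewrite sum_enum_val; under eq_bigr do rewrite sum_enum_val.
  rewrite exchange_big; apply: eq_bigr => j _.
  rewrite mxE big_distrl /=; apply: eq_bigr => i _.
  by rewrite !mxE !enum_valK conjCK; ring.
move=> x y.
have -> : A x y = Am (enum_rank x) (enum_rank y) by rewrite mxE !enum_rankK.
rewrite Peq mul_mx_diag !mxE; apply: eq_bigr => k _.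
rewrite !mxE rmorphM /= conjCK (geC0_conj (_ : 0 <= sqrtC (l 0 k))); last by rewrite sqrtC_ge0.
have hs : sqrtC (l 0 k) * sqrtC (l 0 k) = l 0 k by rewrite -expr2 sqrtCK.
rewrite -{1}hs; ring.
Qed.

Lemma gram (T : finType) (A : op C T) n : psd A -> (#|T| <= n)%N ->
  forall x y, A x y = \sum_(k < n) gvecn A k x * (gvecn A k y)^*.
Proof.
move=> pA hn x y.
pose zz (i : nat) x := if (insub i : option 'I_#|T|) is Some j then gvec A j x else 0.
pose F i := zz i x * (zz i y)^*.
have -> : A x y = \sum_(i < #|T|) F i.
  by rewrite (gram_ord pA); apply: eq_bigr => j _; rewrite /F /zz valK.
rewrite (big_ord_widen n F hn) big_mkcond; apply: eq_bigr => k _.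
case: ifP => hk; first by [].
by rewrite /F /gvecn /zz insubN ?hk // mul0r.
Qed.
Lemma swap6 (A B D E F G : finType) (H : A -> B -> D -> E -> F -> G -> C) :
  \sum_a \sum_b \sum_c \sum_e \sum_f \sum_g H a b c e f g =
  \sum_f \sum_g \sum_a \sum_b \sum_c \sum_e H a b c e f g.
Proof.
rewrite [RHS]pair_big /=.
under eq_bigr => a _ do under eq_bigr => b _ do under eq_bigr => c _ do under eq_bigr => e _ do rewrite pair_big /=.
under eq_bigr => a _ do under eq_bigr => b _ do under eq_bigr => c _ do rewrite exchange_big.
under eq_bigr => a _ do under eq_bigr => b _ do rewrite exchange_big.
under eq_bigr => a _ do rewrite exchange_big.
by rewrite exchange_big.
Qed.
Lemma qpos N (d dd : 'I_N -> nat) (rho : op C (tidx d))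
  (pi : forall i, op C ('I_(d i) * 'I_(dd i))%type) (om : tidx dd -> C) :
  psd rho -> (forall i, psd (pi i)) ->
  0 <= \sum_(x : tidx d) \sum_(u : tidx dd) \sum_(y : tidx d) \sum_(w : tidx dd)
     (\prod_(i < N) pi i (x i, u i) (y i, w i)) * (rho y x * (om w * (om u)^*)).
Proof.
move=> prho ppi.
pose K := (\max_(i < N) #|{: 'I_(d i) * 'I_(dd i)}|)%N.
have hK i : (#|{: 'I_(d i) * 'I_(dd i)}| <= K)%N.
  exact: (leq_bigmax (F := fun i => #|{: 'I_(d i) * 'I_(dd i)}|) i).
pose z i (j : 'I_K) p := gvecn (pi i) j p.
have hpi i p q : pi i p q = \sum_(j < K) z i j p * (z i j q)^*.
  exact: (gram (ppi i) (hK i)).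
pose Z (f : {ffun 'I_N -> 'I_K}) (x : tidx d) (u : tidx dd) :=
  \prod_(i < N) z i (f i) (x i, u i).
have hprod (x : tidx d) (u : tidx dd) (y : tidx d) (w : tidx dd) : \prod_(i < N) pi i (x i, u i) (y i, w i) =
    \sum_(f : {ffun 'I_N -> 'I_K}) Z f x u * (Z f y w)^*.
  under eq_bigr do rewrite hpi.
  rewrite bigA_distr_bigA; apply: eq_bigr => f _.
  by rewrite /Z rmorph_prod -big_split.
pose r := gvec rho.
have hrho (y x : tidx d) : rho y x = \sum_k r k y * (r k x)^* := gram_ord prho y x.
pose al f k := \sum_(x : tidx d) \sum_(u : tidx dd) Z f x u * (r k x)^* * (om u)^*.
suff -> : \sum_(x : tidx d) \sum_(u : tidx dd) \sum_(y : tidx d) \sum_(w : tidx dd)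
     (\prod_(i < N) pi i (x i, u i) (y i, w i)) * (rho y x * (om w * (om u)^*)) =
     \sum_f \sum_k al f k * (al f k)^*.
  by apply: sumr_ge0 => f _; apply: sumr_ge0 => k _; exact: mul_conjC_ge0.
have E f k : al f k * (al f k)^* = \sum_(x : tidx d) \sum_(u : tidx dd)
    \sum_(y : tidx d) \sum_(w : tidx dd)
    (Z f x u * (r k x)^* * (om u)^*) * (Z f y w * (r k y)^* * (om w)^*)^*.
  rewrite /al mulr_suml; apply: eq_bigr => x _; rewrite mulr_suml; apply: eq_bigr => u _.
  rewrite rmorph_sum mulr_sumr; apply: eq_bigr => y _.
  by rewrite rmorph_sum mulr_sumr.
rewrite (eq_bigr _ (fun f _ => eq_bigr _ (fun k _ => E f k))).
rewrite -swap6; apply: eq_bigr => x _; apply: eq_bigr => u _.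
apply: eq_bigr => y _; apply: eq_bigr => w _.
rewrite hprod hrho !mulr_suml; apply: eq_bigr => f _.
rewrite mulr_sumr; apply: eq_bigr => k _.
rewrite /r /gvec !rmorphM /= !conjCK; ring.
Qed.

Lemma psd_proj (T : finType) (v : T -> C) : psd (proj v).
Proof.
split.
  by move=> x y; rewrite /proj rmorphM /= conjCK mulrC.
move=> f.
pose A := \sum_x (f x)^* * v x.
have -> : \sum_x \sum_y (f x)^* * proj v x y * f y = A * A^*.
  rewrite /A rmorph_sum mulr_suml; apply: eq_bigr => x _.
  rewrite mulr_sumr; apply: eq_bigr => y _.
  by rewrite /proj rmorphM /= conjCK; ring.
exact: mul_conjC_ge0.
Qed.

Lemma psd_scale (T : finType) (k : C) (A : op C T) : 0 <= k -> psd A ->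
  psd (fun x y => k * A x y).
Proof.
move=> hk [hA pA]; split.
  by move=> x y; rewrite rmorphM /= (geC0_conj hk) hA.
move=> f.
have -> : \sum_x \sum_y (f x)^* * (k * A x y) * f y =
    k * \sum_x \sum_y (f x)^* * A x y * f y.
  rewrite mulr_sumr; apply: eq_bigr => x _.
  rewrite mulr_sumr; apply: eq_bigr => y _; ring.
exact: mulr_ge0.
Qed.

Lemma cs_ineq n (a : 'I_n -> C) :
  (\sum_k a k) * (\sum_k a k)^* <= n%:R * \sum_k a k * (a k)^*.
Proof.
pose S := \sum_k a k * (a k)^*.
pose A := \sum_k a k.
have E : \sum_k \sum_l (a k - a l) * (a k - a l)^* =
    2%:R * (n%:R * S - A * A^*).
  transitivity (\sum_(k < n) \sum_(l < n) (a k * (a k)^* + a l * (a l)^*)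
       - \sum_(k < n) \sum_(l < n) (a k * (a l)^* + a l * (a k)^*)).
    rewrite -sumrB; apply: eq_bigr => k _; rewrite -sumrB; apply: eq_bigr => l _.
    by rewrite rmorphB /=; ring.
  have E1 : \sum_(k < n) \sum_(l < n) (a k * (a k)^* + a l * (a l)^*) = 2%:R * (n%:R * S).
    under eq_bigr do rewrite big_split /= sumr_const card_ord.
    rewrite big_split /= sumrMnl sumr_const card_ord -/S.
    by rewrite -[S *+ n]mulr_natl; ring.
  have E2 : \sum_(k < n) \sum_(l < n) (a k * (a l)^* + a l * (a k)^*) = 2%:R * (A * A^*).
    under eq_bigr do rewrite big_split /=.
    rewrite big_split /= [X in _ + X]exchange_big /=.
    have -> : \sum_(k < n) \sum_(l < n) a k * (a l)^* = A * A^*.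
      rewrite /A rmorph_sum mulr_suml; apply: eq_bigr => k _; by rewrite mulr_sumr.
    by ring.
  rewrite E1 E2; ring.
have : 0 <= 2%:R * (n%:R * S - A * A^*).
  rewrite -E; apply: sumr_ge0 => k _; apply: sumr_ge0 => l _; exact: mul_conjC_ge0.
by rewrite pmulr_rge0 ?ltr0n // subr_ge0.
Qed.

Lemma swap5 (S A B D E : finType) (H : S -> A -> B -> D -> E -> C) :
  \sum_s \sum_a \sum_b \sum_c \sum_e H s a b c e =
  \sum_a \sum_b \sum_c \sum_e \sum_s H s a b c e.
Proof.
rewrite exchange_big.
under eq_bigr => a _ do rewrite exchange_big.
under eq_bigr => a _ do under eq_bigr => b _ do rewrite exchange_big.
under eq_bigr => a _ do under eq_bigr => b _ do under eq_bigr => c _ do rewrite exchange_big.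
by [].
Qed.

Lemma re_sum (I : finType) (c q : I -> C) : (forall i, (q i)^* = q i) ->
  \sum_i ((c i + (c i)^*) / 2) * q i =
  ((\sum_i c i * q i) + (\sum_i c i * q i)^*) / 2.
Proof.
move=> hq; rewrite rmorph_sum -big_split /= mulr_suml; apply: eq_bigr => i _.
by rewrite rmorphM /= hq; ring.
Qed.

End Aux.
Arguments proj : clear implicits.
Section Aux2.
Variable C : numClosedFieldType.

Definition bell n (p q : 'I_n * 'I_n) : C :=
  (p.1 == p.2)%:R * (q.1 == q.2)%:R / n%:R.

Lemma psd_bell n : psd (@bell n).
Proof.
pose phi := fun p : 'I_n * 'I_n => ((p.1 == p.2)%:R : C).
have E p q : bell p q = n%:R^-1 * proj C _ phi p q.
  by rewrite /bell /proj /phi rmorph_nat mulrC mulrA.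
have hk : (0 : C) <= n%:R^-1 by rewrite invr_ge0 ler0n.
have [h1 h2] := psd_scale hk (psd_proj phi).
split => [p q|f]; first by rewrite !E; exact: h1.
under eq_bigr do under eq_bigr do rewrite E.
exact: h2.
Qed.

Lemma sum_delta n m (hm : (m < n)%N) (F : 'I_n -> C) :
  \sum_(w < n) ((val w == m)%:R * F w) = F (Ordinal hm).
Proof.
rewrite (bigD1 (Ordinal hm)) //= eqxx mul1r big1 ?addr0 // => w hw.
suff -> : (val w == m) = false by rewrite mul0r.
apply/negbTE; apply: contra hw => /eqP hwm; apply/eqP/val_inj => /=.
exact: hwm.
Qed.

Lemma sum_delta1 (T : finType) (t0 : T) (F : T -> C) :
  \sum_t ((t == t0)%:R * F t) = F t0.
Proof.
rewrite (bigD1 t0) //= eqxx mul1r big1 ?addr0 // => t ht.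
by rewrite (negbTE ht) mul0r.
Qed.

Lemma sum_pair n (G : 'I_n * 'I_n -> C) :
  \sum_p G p = \sum_(k < n) \sum_(l < n) G (k, l).
Proof. by rewrite pair_bigA; apply: eq_bigr => [[k l]]. Qed.

Lemma psd_Ibell n : (0 < n)%N ->
  psd (fun p q : 'I_n * 'I_n => (p == q)%:R - bell p q).
Proof.
move=> hn; split.
  move=> p q; rewrite rmorphB /= rmorph_nat eq_sym; congr (_ - _).
  have [_ pb] := psd_bell n.
  by have [hb _] := psd_bell n; rewrite hb.
move=> f.
pose A := \sum_(k < n) f (k, k).
pose S := \sum_p (f p)^* * f p.
have E : \sum_p \sum_q (f p)^* * ((p == q)%:R - bell p q) * f q =
    S - A^* * A / n%:R.
  transitivity (\sum_p \sum_q ((q == p)%:R * ((f p)^* * f q))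
     - \sum_p \sum_q ((f p)^* * (p.1 == p.2)%:R) * ((q.1 == q.2)%:R * f q) / n%:R).
    rewrite -sumrB; apply: eq_bigr => p _; rewrite -sumrB; apply: eq_bigr => q _.
    by rewrite /bell eq_sym; ring.
  congr (_ - _).
    by apply: eq_bigr => p _; rewrite sum_delta1.
  have hA : \sum_q (q.1 == q.2)%:R * f q = A.
    rewrite sum_pair /A; apply: eq_bigr => k _.
    under eq_bigr do rewrite eq_sym.
    exact: sum_delta1.
  under eq_bigr do rewrite -mulr_suml.
  rewrite -mulr_suml; congr (_ / _).
  under eq_bigr do rewrite -mulr_sumr hA.
  rewrite -mulr_suml; congr (_ * _).
  rewrite -hA rmorph_sum; apply: eq_bigr => q _.
  by rewrite rmorphM /= rmorph_nat mulrC.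
rewrite E subr_ge0.
have hn' : (0 : C) < n%:R by rewrite ltr0n.
rewrite ler_pdivrMr //.
have h1 : A^* * A <= n%:R * \sum_(k < n) f (k, k) * (f (k, k))^*.
  by rewrite mulrC; exact: cs_ineq.
apply: (le_trans h1); rewrite mulrC; apply: ler_wpM2r; first exact: ltW.
rewrite /S sum_pair; apply: ler_sum => k _.
rewrite (bigD1 k) //= mulrC -[X in X <= _]addr0 lerD2l.
by apply: sumr_ge0 => l _; rewrite mulrC; exact: mul_conjC_ge0.
Qed.
End Aux2.

Close Scope sesquilinear_scope.

Section Game.
Variable C : numClosedFieldType.

Definition theta (k : 'I_4) : C := 'i ^+ k.
Definition hh : C := sqrtC (2^-1).

Lemma hhK : hh * hh^* = 2^-1.
Proof.
rewrite /hh geC0_conj ?sqrtC_ge0 ?invr_ge0 ?ler0n // -expr2 sqrtCK //.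
Qed.

Lemma thetaK k : theta k * (theta k)^* = 1.
Proof.
rewrite /theta rmorphXn /= conjCi -exprMn mulrN -expr2 sqrCi opprK expr1n //.
Qed.

Lemma sum_theta : \sum_(k < 4) theta k = 0.
Proof.
rewrite !big_ord_recr big_ord0 /= /theta /=.
rewrite !exprS expr0 !mulr1 -expr2 sqrCi; ring.
Qed.

Lemma sum_theta2 : \sum_(k < 4) theta k * theta k = 0.
Proof.
rewrite (eq_bigr (fun k : 'I_4 => (-1) ^+ k)) => [|k _]; last first.
  by rewrite /theta -exprD addnn -mul2n exprM sqrCi.
rewrite !big_ord_recr big_ord0 /= !exprS expr0; ring.
Qed.

Lemma polar (al be ga de : C) :
  \sum_(k < 4) (theta k / 2) * (2^-1 * ((al + theta k * be) * (ga + (theta k)^* * de)))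
  = al * de.
Proof.
have E k : (theta k / 2) * (2^-1 * ((al + theta k * be) * (ga + (theta k)^* * de))) =
   2^-1 * 2^-1 * (theta k * (al * ga + be * de) + al * de + (theta k * theta k) * (be * ga)).
  have tk := thetaK k.
  transitivity (2^-1 * 2^-1 * (theta k * (al * ga + be * de) + al * de + (theta k * theta k) * (be * ga))
      + 2^-1 * 2^-1 * (theta k * (theta k)^* - 1) * (al * de + theta k * be * de)).
    ring.
  by rewrite tk subrr mulr0 mul0r addr0.
under eq_bigr do rewrite E.
rewrite -mulr_sumr !big_split /= -!mulr_suml sum_theta sum_theta2 sumr_const card_ord.
rewrite !mul0r add0r addr0 -mulr_natl.
have h2 : (2 : C) != 0 by rewrite pnatr_eq0.
by field.
Qed.

Variable N : nat.
Variable d : 'I_N -> nat.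

Definition Kd := (\max_(i < N) d i)%N.
Local Notation X := ('I_Kd * 'I_Kd * 'I_4)%type.

Definition psiX (i : 'I_N) (t : X) (w : 'I_(d i)) : C :=
  if ((t.1.1 : nat) < d i)%N && ((t.1.2 : nat) < d i)%N then
    if (t.1.1 : nat) == t.1.2 then ((val w == t.1.1)%:R)
    else hh * ((val w == t.1.1)%:R + theta t.2 * (val w == t.1.2)%:R)
  else (val w == 0%N)%:R.

Arguments psiX : clear implicits.

Definition gamX (i : 'I_N) (a b : 'I_(d i)) (t : X) : C :=
  if ((t.1.1 : nat) == a) && ((t.1.2 : nat) == b) then
    (if (a : nat) == b then (t.2 == 0 :> nat)%:R else theta t.2 / 2) else 0.

Lemma le_Kd i : (d i <= Kd)%N.
Proof. exact: (leq_bigmax (F := d) i). Qed.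

Lemma local i (a b w u : 'I_(d i)) :
  \sum_(t : X) gamX a b t * (psiX i t w * (psiX i t u)^*) =
  (val w == val a)%:R * (val u == val b)%:R.
Proof.
pose H (a' b' : 'I_Kd) (k : 'I_4) := gamX a b (a', b', k) *
   (psiX i (a', b', k) w * (psiX i (a', b', k) u)^*).
transitivity (\sum_a' \sum_b' \sum_k H a' b' k).
  by rewrite pair_bigA pair_bigA; apply: eq_bigr => [[[a' b'] k]] _.
have ha : (a < Kd)%N := leq_trans (ltn_ord a) (le_Kd i).
have hb : (b < Kd)%N := leq_trans (ltn_ord b) (le_Kd i).
rewrite (bigD1 (Ordinal ha)) //= [X in _ + X]big1 ?addr0; last first.
  move=> a' ha'; apply: big1 => b' _; apply: big1 => k _.
  rewrite /H /gamX /=.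
  suff -> : (a' == a :> nat) = false by rewrite /= mul0r.
  apply/negbTE; apply: contra ha' => /eqP e; apply/eqP/val_inj => /=; exact: e.
rewrite (bigD1 (Ordinal hb)) //= [X in _ + X]big1 ?addr0; last first.
  move=> b' hb'; apply: big1 => k _.
  rewrite /H /gamX /= eqxx /=.
  suff -> : (b' == b :> nat) = false by rewrite /= mul0r.
  apply/negbTE; apply: contra hb' => /eqP e; apply/eqP/val_inj => /=; exact: e.
rewrite /H /gamX /psiX /= !eqxx !ltn_ord /=.
case: eqP => hab.
  rewrite !big_ord_recr big_ord0 /= !add0r.
  by rewrite rmorph_nat mul1r !mul0r !addr0 hab.
transitivity (\sum_(k < 4) (theta k / 2) * (2^-1 *
     (((val w == val a)%:R + theta k * (val w == val b)%:R) *
      ((val u == val a)%:R^* + (theta k)^* * (val u == val b)%:R^*)))).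
  apply: eq_bigr => k _; rewrite rmorphM rmorphD /= rmorphM /= -hhK; ring.
by rewrite polar !rmorph_nat.
Qed.

Lemma psiX_unit i t : (0 < d i)%N -> unit_vec (psiX i t).
Proof.
move=> hd; rewrite /unit_vec /psiX.
case E : (((t.1.1 : nat) < d i)%N && ((t.1.2 : nat) < d i)%N); last first.
  by rewrite /= (sum_delta hd) /= ?eqxx rmorph1.
move/andP: E => [ha hb].
have [hab|hab] := eqVneq (t.1.1 : nat) t.1.2.
  by rewrite hab (sum_delta hb) /= ?eqxx rmorph1.
transitivity (\sum_(w < d i) ((val w == t.1.1)%:R * (hh * hh^* * ((val w == t.1.1)%:R + (theta t.2)^* * (val w == t.1.2)%:R))
   + (val w == t.1.2)%:R * (hh * hh^* * theta t.2 * ((val w == t.1.1)%:R + (theta t.2)^* * (val w == t.1.2)%:R)))).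
  by apply: eq_bigr => w _; rewrite !rmorphM !rmorphD /= !rmorph_nat; ring.
rewrite big_split /= (sum_delta ha) (sum_delta hb) /= !eqxx.
case: eqP => [e|_]; first by rewrite e eqxx in hab.
case: eqP => [e|_]; first by rewrite e eqxx in hab.
rewrite hhK /= mulr0 addr0 add0r !mulr1 -mulrA thetaK mulr1.
have h2 : (2 : C) != 0 by rewrite pnatr_eq0.
by field.
Qed.

Definition nS := #|{: X}|.
Definition psiG i (s : 'I_nS) : 'I_(d i) -> C := psiX i (enum_val s).
Definition gamG i (a b : 'I_(d i)) (s : 'I_nS) : C := gamX a b (enum_val s).
Arguments psiG : clear implicits.

Lemma localG i (a b w u : 'I_(d i)) :
  \sum_(s < nS) gamG a b s * (psiG i s w * (psiG i s u)^*) =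
  (val w == val a)%:R * (val u == val b)%:R.
Proof.
rewrite -(local a b w u).
by rewrite (sum_enum_val (fun t => gamX a b t * (psiX i t w * (psiX i t u)^*))).
Qed.

Definition cc (om : tidx d -> C) (s : {ffun 'I_N -> 'I_nS}) : C :=
  \sum_(x : tidx d) \sum_(y : tidx d) om x * (om y)^* * \prod_i gamG (x i) (y i) (s i).

Lemma prod_eq (x w : tidx d) : \prod_i ((val (w i) == val (x i))%:R : C) = (x == w)%:R.
Proof.
have [->|hne] := eqVneq x w.
  by rewrite ?eqxx; apply: big1 => i _; rewrite ?eqxx.
have : [exists i, x i != w i].
  rewrite -negb_forall; apply: contra hne => /forallP h.
  by apply/eqP/ffunP => i; apply/eqP.
case/existsP => i hi.
rewrite (bigD1 i) //=.
rewrite (_ : (val (w i) == val (x i)) = false) ?mul0r //.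
by apply/negbTE; rewrite eq_sym.
Qed.

Lemma decomp om (w u : tidx d) :
  \sum_(s : {ffun 'I_N -> 'I_nS}) cc om s *
     \prod_i (psiG i (s i) (w i) * (psiG i (s i) (u i))^*) = om w * (om u)^*.
Proof.
have step (s : {ffun 'I_N -> 'I_nS}) : cc om s * \prod_i (psiG i (s i) (w i) * (psiG i (s i) (u i))^*)
   = \sum_(x : tidx d) \sum_(y : tidx d) om x * (om y)^* * \prod_i gamG (x i) (y i) (s i) *
       \prod_i (psiG i (s i) (w i) * (psiG i (s i) (u i))^*).
  by rewrite /cc mulr_suml; apply: eq_bigr => x _; rewrite mulr_suml.
rewrite (eq_bigr _ (fun s _ => step s)).
rewrite exchange_big.
under eq_bigr do rewrite exchange_big.
transitivity (\sum_(x : tidx d) \sum_(y : tidx d) om x * (om y)^* *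
   \prod_i ((val (w i) == val (x i))%:R * (val (u i) == val (y i))%:R)).
  apply: eq_bigr => x _; apply: eq_bigr => y _.
  under eq_bigr do rewrite -mulrA -big_split /=.
  rewrite -mulr_sumr; congr (_ * _).
  rewrite -(bigA_distr_bigA (fun i (t : 'I_nS) => gamG (x i) (y i) t * (psiG i t (w i) * (psiG i t (u i))^*))) /=; apply: eq_bigr => i _.
  exact: localG.
under eq_bigr do under eq_bigr do rewrite big_split /= !prod_eq.
rewrite (bigD1 w) //= [X in _ + X]big1 ?addr0; last first.
  by move=> x hx; apply: big1 => y _; rewrite (negbTE hx) mul0r mulr0.
rewrite (bigD1 u) //= [X in _ + X]big1 ?addr0; last first.
  by move=> y hy; rewrite (negbTE hy) mulr0 mulr0.
by rewrite !eqxx !mulr1.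
Qed.

Definition a0 : {dffun forall i : 'I_N, 'I_2} := [ffun => ord0].
Definition bre om (s : {ffun 'I_N -> 'I_nS}) := (cc om s + (cc om s)^*) / 2.
Definition game om : sqgame C N :=
  @SQGame C N (fun _ => nS) (fun _ => 2%N) d (fun i s => psiG i s)
    (fun s a => (a == a0)%:R * bre om s).
Definition Mb om : local_meas d (game om) := fun i a =>
  if val a == 0%N then @bell C (d i) else (fun p q => (p == q)%:R - @bell C (d i) p q).

Arguments Mb : clear implicits.

Lemma game_valid om : (forall i, 0 < d i)%N -> valid_game (game om).
Proof.
move=> hd; split.
  by move=> i t; exact: psiX_unit.
move=> t a; apply: realM; first exact: realn.
apply/CrealP; rewrite /bre rmorphM rmorphD /= conjCK fmorphV /= rmorph_nat.
by rewrite addrC.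
Qed.

Lemma Mb_valid om : (forall i, 0 < d i)%N -> valid_meas (Mb om).
Proof.
move=> hd i; split.
  move=> a; rewrite /Mb; case: ifP => _; first exact: psd_bell.
  exact: psd_Ibell.
move=> x y; rewrite !big_ord_recr big_ord0 /= add0r /Mb /=.
by rewrite addrC subrK.
Qed.

Definition oms om (s : {dffun forall i, 'I_(ns (game om) i)}) (w : tidx d) : C :=
  \prod_i psiG i (s i) (w i).

Lemma corr_expand om (Z : op C (tidx d)) (Mx : local_meas d (game om)) a s :
  correlation Z Mx a s = \sum_(x : tidx d) \sum_(u : tidx d) \sum_(y : tidx d) \sum_(w : tidx d)
    (\prod_i Mx i (a i) (x i, u i) (y i, w i)) * (Z y x * (oms s w * (oms s u)^*)).
Proof.
apply: eq_bigr => x _; apply: eq_bigr => u _; apply: eq_bigr => y _; apply: eq_bigr => w _.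
by rewrite /oms rmorph_prod -big_split.
Qed.

Lemma corrsum om (Z : op C (tidx d)) (Mx : local_meas d (game om)) a :
  \sum_(s : {dffun forall i, 'I_(ns (game om) i)}) cc om s * correlation Z Mx a s =
  \sum_(x : tidx d) \sum_(u : tidx d) \sum_(y : tidx d) \sum_(w : tidx d)
    (\prod_i Mx i (a i) (x i, u i) (y i, w i)) * (Z y x * (om w * (om u)^*)).
Proof.
have step (s : {dffun forall i, 'I_(ns (game om) i)}) : cc om s * correlation Z Mx a s =
  \sum_(x : tidx d) \sum_(u : tidx d) \sum_(y : tidx d) \sum_(w : tidx d)
    cc om s * ((\prod_i Mx i (a i) (x i, u i) (y i, w i)) * (Z y x * (oms s w * (oms s u)^*))).
  rewrite corr_expand mulr_sumr; apply: eq_bigr => x _.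
  rewrite mulr_sumr; apply: eq_bigr => u _.
  rewrite mulr_sumr; apply: eq_bigr => y _.
  by rewrite mulr_sumr.
rewrite (eq_bigr _ (fun s _ => step s)) swap5.
apply: eq_bigr => x _; apply: eq_bigr => u _; apply: eq_bigr => y _; apply: eq_bigr => w _.
have := decomp om w u.
set P := \prod_i Mx i (a i) (x i, u i) (y i, w i).
move=> <-.
rewrite mulr_sumr mulr_sumr; apply: eq_bigr => s _.
rewrite /oms rmorph_prod -big_split /=; ring.
Qed.

Lemma payoff_eq om (Z : op C (tidx d)) (Mx : local_meas d (game om)) :
  payoff Z Mx = \sum_(s : {dffun forall i, 'I_(ns (game om) i)}) bre om s * correlation Z Mx a0 s.
Proof.
apply: eq_bigr => s _ /=.
under eq_bigr do rewrite -mulrA.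
exact: sum_delta1.
Qed.

Definition cD : C := \prod_i ((d i)%:R)^-1.

Lemma prod_bell (x u y w : tidx d) :
  \prod_i @bell C (d i) (x i, u i) (y i, w i) = cD * ((u == x)%:R * (w == y)%:R).
Proof.
rewrite /bell /= big_split big_split /= -(prod_eq u x) -(prod_eq w y) /cD.
by rewrite mulrC mulrA.
Qed.

Lemma bell_red om (Z : op C (tidx d)) (Om : tidx d -> tidx d -> C) :
  \sum_(x : tidx d) \sum_(u : tidx d) \sum_(y : tidx d) \sum_(w : tidx d)
    (\prod_i Mb om i (a0 i) (x i, u i) (y i, w i)) * (Z y x * Om w u) =
  cD * \sum_(x : tidx d) \sum_(y : tidx d) Z y x * Om y x.
Proof.
rewrite mulr_sumr; apply: eq_bigr => x _.
have hM (u y w : tidx d) : \prod_i Mb om i (a0 i) (x i, u i) (y i, w i) =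
    cD * ((u == x)%:R * (w == y)%:R).
  by rewrite -prod_bell; apply: eq_bigr => i _; rewrite /Mb /a0 ffunE.
transitivity (\sum_(u : tidx d) (u == x)%:R * \sum_(y : tidx d) cD * (Z y x * Om y u)).
  apply: eq_bigr => u _; rewrite mulr_sumr; apply: eq_bigr => y _.
  transitivity (\sum_(w : tidx d) (w == y)%:R * ((u == x)%:R * (cD * (Z y x * Om w u)))).
    by apply: eq_bigr => w _; rewrite hM; ring.
  by rewrite sum_delta1.
by rewrite sum_delta1 mulr_sumr.
Qed.

End Game.

Unset Implicit Arguments.

Theorem theorem2 (C : numClosedFieldType) (N : nat) (d : 'I_N -> nat)
  (W : op C (tidx d)) :
  popt W -> ~ density W ->
  exists (G : sqgame C N) (M : local_meas d G),
    valid_game G /\ valid_meas M /\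
    payoff W M < 0 /\
    forall (rho : op C (tidx d)) (M' : local_meas d G),
      density rho -> valid_meas M' -> 0 <= payoff rho M'.
Proof.
move=> [hW [trW pW]] nd.
have hd : forall i, (0 < d i)%N.
  move=> i; rewrite lt0n; apply/negP => /eqP hi.
  have : trace W = 0.
    rewrite /trace; apply: big1 => x _; exfalso.
    by move: (x i); rewrite hi; case.
  by rewrite trW => /eqP; rewrite oner_eq0.
have [v hv] : exists v : tidx d -> C,
    ~ (0 <= \sum_x \sum_y (v x)^* * W x y * v y).
  apply: not_all_ex_not => H; apply: nd; split => //; split => //.
set qv := \sum_x \sum_y (v x)^* * W x y * v y in hv.
have qreal : qv \is Num.real.
  apply/CrealP; rewrite /qv rmorph_sum exchange_big; apply: eq_bigr => y _.
  rewrite rmorph_sum; apply: eq_bigr => x _.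
  by rewrite !rmorphM /= conjCK -hW; ring.
have qneg : qv < 0.
  by rewrite real_ltNge ?real0 //; apply/negP.
pose om := fun x => (v x)^*.
have cDpos : 0 < cD C d :> C.
  by apply: prodr_gt0 => i _; rewrite invr_gt0 ltr0n hd.
exists (game om), (@Mb C N d om).
split; first exact: game_valid.
split; first exact: Mb_valid.
split.
  rewrite payoff_eq re_sum.
    have hX : \sum_s cc om s * correlation W (@Mb C N d om) (a0 N) s = cD C d * qv.
      rewrite corrsum bell_red; congr (_ * _).
      rewrite /qv exchange_big; apply: eq_bigr => y _; apply: eq_bigr => x _.
      by rewrite /om conjCK; ring.
    rewrite hX (CrealP (_ : cD C d * qv \is Num.real)); last first.
      by apply: realM => //; exact: gtr0_real.
    have -> : (cD C d * qv + cD C d * qv) / 2 = cD C d * qv.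
      have h2 : (2 : C) != 0 by rewrite pnatr_eq0.
      by field.
    by rewrite pmulr_rlt0.
  move=> s; apply: geC0_conj.
  rewrite corr_expand bell_red; apply: mulr_ge0; first exact: ltW.
  pose P := fun i => proj C _ (fun a => (@psiG C N d i (s i) a)^*).
  have := pW P (fun i => psd_proj _).
  rewrite /trace_mul /tensor_op exchange_big.
  congr (0 <= _); apply: eq_bigr => x _; apply: eq_bigr => y _.
  rewrite /oms rmorph_prod -big_split /=; congr (_ * _).
  by apply: eq_bigr => i _; rewrite /P /proj conjCK mulrC.
move=> rho M' [prho _] hM'.
have hpi : forall i, psd (M' i (a0 N i)) by move=> i; exact: (hM' i).1.
rewrite payoff_eq re_sum.
  rewrite corrsum.
  have hq := qpos om prho hpi.
  by rewrite (geC0_conj hq); apply: divr_ge0; [exact: addr_ge0 | rewrite ler0n].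
move=> s; apply: geC0_conj.
rewrite corr_expand.
exact: (qpos (oms s) prho hpi).
Qed.
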